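(* Let $\Omega\subset\mathbb{R}^d$ be a bounded open set, $T>0$, $T_0\in(0,T)$, $r_0>0$, and $\mathfrak{B}\in L^\infty(0,T;W^{1,\infty}(\mathbb{R}^d)^d)$. Let $\mathcal{O}\subset\mathbb{R}^d$ be a nonempty open set with bounded boundary, and assume that $(T,T_0,r_0,\mathfrak{B},\Omega)$ satisfies the flushing condition for $\mathcal{O}$. Then there exists an open set $\mathcal{O}_0$ with $\overline{\mathcal{O}_0}$ compact and contained in $\mathcal{O}$ such that $(T,T_0,r_0/2,\mathfrak{B},\Omega)$ satisfies the flushing condition for $\mathcal{O}_0$.
   Context: $\Phi(t,t_0,x_0)$ denotes the solution of $\frac{d}{dt}\Phi(t,t_0,x_0)=\mathfrak{B}(\Phi(t,t_0,x_0),t)$, $\Phi(t_0,t_0,x_0)=x_0$, for $t,t_0\in[0,T]$. For a nonempty open $\mathcal{O}\subset\mathbb{R}^d$ and $r>0$, we say $(T,T_0,r,\mathfrak{B},\Omega)$ satisfies the flushing condition for $\mathcal{O}$ if: for all $x_0\in\overline{\Omega}$ and all $t_0\in[T_0,T]$ there exists $t\in(t_0-T_0,t_0)$ such that $\Phi(t,t_0,x)\in\mathcal{O}$ for all $x\in\overline{B}(x_0,r)$. *)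

(* Defs.v *)
From HB Require Import structures.
From mathcomp Require Import all_boot all_order all_algebra.
From mathcomp Require Import all_classical all_reals all_analysis.
Set Implicit Arguments. Unset Strict Implicit. Unset Printing Implicit Defensive.
Import Order.TTheory GRing.Theory Num.Theory.
Import numFieldNormedType.Exports.
Local Open Scope classical_set_scope.
Local Open Scope ring_scope.

Definition ointegral (R : realType) (a b : R) (f : R -> R) : R :=
  if a <= b then \int[@lebesgue_measure R]_(s in `[a, b]) f s
  else - \int[@lebesgue_measure R]_(s in `[b, a]) f s.

Definition euclid_cball (R : realType) (d : nat) (x0 : 'rV[R]_d) (r : R)
  : set 'rV[R]_d :=
  [set y | \sum_(i < d) (y ord0 i - x0 ord0 i) ^+ 2 <= r ^+ 2].

(* B in L^oo(0,T; W^{1,oo}(R^d)^d), represented (Caratheodory) by a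
   representative B : R^d -> R -> R^d which is measurable in t for every x,
   bounded on R^d x [0,T] and Lipschitz in x uniformly in t in [0,T]. *)
Definition Linf_W1inf (R : realType) (d : nat) (T : R)
  (B : 'rV[R]_d -> R -> 'rV[R]_d) : Prop :=
  [/\ (forall (x : 'rV[R]_d) (i : 'I_d),
          measurable_fun `[0, T] (fun t => B x t ord0 i)),
      (exists M : R, forall x t, 0 <= t <= T -> `|B x t| <= M) &
      (exists L : R, forall x y t, 0 <= t <= T ->
          `|B x t - B y t| <= L * `|x - y|)].

(* Phi is the flow of  d/dt Phi(t,t0,x) = B(Phi(t,t0,x),t), Phi(t0,t0,x)=x,
   for t, t0 in [0,T]: Caratheodory solution, i.e. continuous in t and
   satisfying the integral equation (componentwise). *)
Definition is_flow (R : realType) (d : nat) (T : R)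
  (B : 'rV[R]_d -> R -> 'rV[R]_d) (Phi : R -> R -> 'rV[R]_d -> 'rV[R]_d)
  : Prop :=
  (forall t0 x, 0 <= t0 <= T ->
     {within `[0, T], continuous (fun t => Phi t t0 x)}) /\
  (forall t0 t x (i : 'I_d), 0 <= t0 <= T -> 0 <= t <= T ->
     Phi t t0 x ord0 i
     = x ord0 i + ointegral t0 t (fun s => B (Phi s t0 x) s ord0 i)).

Definition flushing (R : realType) (d : nat) (T T0 r : R)
  (Phi : R -> R -> 'rV[R]_d -> 'rV[R]_d) (Omega O : set 'rV[R]_d) : Prop :=
  forall x0 t0, closure Omega x0 -> T0 <= t0 <= T ->
    exists t, t0 - T0 < t < t0 /\
      forall x, euclid_cball x0 r x -> O (Phi t t0 x).

(* Main.v *)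
Require Import Defs.
From HB Require Import structures.
From mathcomp Require Import all_boot all_order all_algebra.
From mathcomp Require Import all_classical all_reals all_analysis.
From mathcomp Require Import ring lra.
Import Order.TTheory GRing.Theory Num.Theory.
Import numFieldNormedType.Exports.
Local Open Scope classical_set_scope.
Local Open Scope ring_scope.

Section S.
Context {R : realType} {d : nat}.
Variables (T L : R) (B : 'rV[R]_d -> R -> 'rV[R]_d).
Hypothesis BL : forall x y t, 0 <= t <= T -> `|B x t - B y t| <= L * `|x - y|.
Hypothesis Bm : forall x i, measurable_fun `[0,T] (fun t => B x t ord0 i).

Definition psi (n : nat) (s : R) : R :=
  (Num.truncn (s * n.+1%:R))%:R / n.+1%:R.

Lemma psi_prop n s : 0 <= s -> 0 <= psi n s <= s /\ s - psi n s <= n.+1%:R^-1.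
Proof.
move=> s0; have N0 : 0 < n.+1%:R :> R by [].
have := truncn_itv (mulr_ge0 s0 (ltW N0)) => /andP[h1 h2].
rewrite /psi; split.
  by rewrite divr_ge0 //= ler_pdivrMr.
have : s <= (Num.truncn (s * n.+1%:R)).+1%:R / n.+1%:R.
  by rewrite ler_pdivlMr // ltW.
by rewrite -natr1 mulrDl mul1r lerBlDl addrC.
Qed.


Lemma meas_step n (g : R -> 'rV[R]_d) i :
  measurable_fun `[0,T] (fun s => B (g (psi n s)) s ord0 i).
Proof.
set N : R := n.+1%:R; have N0 : 0 < N by [].
pose E k := `[0,T] `&` [set s : R | Num.truncn (s * N) = k].
have EE k : E k = `[0,T] `&` `[k%:R / N, k.+1%:R / N[.
  apply/seteqP; split => s /= [sT hs]; split => //.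
    have s0 : 0 <= s by move: sT => /=; rewrite in_itv /= => /andP[].
    move: (truncn_itv (mulr_ge0 s0 (ltW N0))); rewrite hs => /andP[h1 h2].
    by rewrite in_itv /= ler_pdivrMr // ltr_pdivlMr // h1 h2.
  have s0 : 0 <= s by move: sT => /=; rewrite in_itv /= => /andP[].
  apply: truncn_def; move: hs => /=; rewrite in_itv /= ler_pdivrMr // ltr_pdivlMr //.
have mE k : measurable (E k) by rewrite EE; exact: measurableI.
have -> : `[0,T]%classic = \bigcup_k E k :> set R.
  apply/seteqP; split => [s sT|s [k _ []//]].
  by exists (Num.truncn (s * N)) => //.
apply/(measurable_fun_bigcup _ mE) => k.
apply: (@eq_measurable_fun _ _ _ _ (E k) (fun s => B (g (k%:R / N)) s ord0 i)).
  by move=> s; rewrite inE => -[_ /= h]; rewrite /psi -/N h.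
apply: (measurable_funS _ _ (Bm _ _)) => //.
by move=> s [].
Qed.

Lemma entry_le_norm (v : 'rV[R]_d) i : `|v ord0 i| <= `|v|.
Proof.
have -> : `|v| = mx_norm v by []; rewrite mx_normrE; apply/bigmax_geP; right => /=.
by exists (ord0, i).
Qed.

Lemma entryB_le_norm (u v : 'rV[R]_d) i : `|u ord0 i - v ord0 i| <= `|u - v|.
Proof. by have := entry_le_norm (u - v) i; rewrite !mxE. Qed.

Lemma norm_le_entries (v : 'rV[R]_d) c : 0 <= c ->
  (forall i, `|v ord0 i| <= c) -> `|v| <= c.
Proof.
move=> c0 H; have -> : `|v| = mx_norm v by []; rewrite mx_normrE.
apply: bigmax_le => // -[a b] _ /=.
by rewrite (ord1 a); exact: H.
Qed.

Lemma meas_comp (g : R -> 'rV[R]_d) i : {within `[0,T], continuous g} ->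
  measurable_fun `[0,T] (fun s => B (g s) s ord0 i).
Proof.
move=> cg.
apply: (@measurable_realfun.measurable_fun_cvg _ _ _ _ (fun n s => B (g (psi n s)) s ord0 i)).
  by move=> n; exact: meas_step.
move=> s sT; have := sT; rewrite /= in_itv /= => /andP[s0 sT'].
apply/cvgrPdist_lt => e e0.
have L1 : 0 < `|L| + 1 by rewrite ltr_wpDl.
have := (subspace_continuousP _ g).1 cg s sT.
move/cvgrPdist_lt => /(_ (e / (`|L| + 1))) [].
  by rewrite divr_gt0.
move=> del del0 Hdel /=.
near=> n.
have [/andP[p0 ps] sp] := psi_prop n s s0.
have pT : `[0,T]%classic (psi n s) by rewrite /= in_itv /= p0 (le_trans ps).
have bs : ball s del (psi n s).
  rewrite /ball /= ger0_norm ?subr_ge0 //; apply: (le_lt_trans sp).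
  near: n.
  exact: (near_infty_natSinv_lt (PosNum del0)).
have := Hdel _ bs pT => h.
apply: (le_lt_trans (entryB_le_norm _ _ _)).
have sT2 : 0 <= s <= T by rewrite s0 sT'.
have h2 := BL (g s) (g (psi n s)) s sT2.
apply: (le_lt_trans h2).
apply: (le_lt_trans (ler_wpM2r (normr_ge0 _) (ler_norm L))).
apply: (le_lt_trans (y := (`|L|+1) * `|g s - g (psi n s)|)).
  by rewrite ler_wpM2r // lerDl.
by rewrite mulrC -ltr_pdivlMr.
Unshelve. all: by end_near.
Qed.

End S.

Section I.
Context {R : realType}.
Notation mu := (@lebesgue_measure R).

Lemma bint (f : R -> R) a b M : a <= b -> measurable_fun (`[a,b] : set R) f ->
  (forall x, a <= x <= b -> `|f x| <= M) -> mu.-integrable `[a,b] (EFin \o f).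
Proof.
move=> ab mf fM; apply: measurable_bounded_integrable => //.
  change (lebesgue_measure (`[a,b]%classic : set R) < +oo)%E; rewrite lebesgue_measure_itv; by case: ifP => _ //=; rewrite ?ltry.
exists M; split; first exact: num_real.
move=> y My x /=; rewrite in_itv /= => /fM h.
exact: (le_trans h (ltW My)).
Qed.


Arguments bint {f a b M}.
Lemma int_diff_bound a b (f g : R -> R) M m : a <= b ->
  measurable_fun (`[a,b] : set R) f -> measurable_fun (`[a,b] : set R) g ->
  (forall x, a <= x <= b -> `|f x| <= M) ->
  (forall x, a <= x <= b -> `|g x| <= M) ->
  (forall x, a <= x <= b -> `|f x - g x| <= m) ->
  `|\int[mu]_(s in `[a,b]) f s - \int[mu]_(s in `[a,b]) g s| <= m * (b - a).
Proof.
move=> ab mf mg fM gM fgm.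
have mab : measurable (`[a,b]%classic : set R) by [].
have If := bint ab mf fM; have Ig := bint ab mg gM.
have mfg : measurable_fun (`[a,b] : set R) (fun x => f x - g x) by exact: (measurable_realfun.measurable_funB _ _).
have mgf : measurable_fun (`[a,b] : set R) (fun x => g x - f x) by exact: (measurable_realfun.measurable_funB _ _).
have Ifg := bint ab mfg fgm.
have Igf : mu.-integrable `[a,b] (EFin \o (fun x => g x - f x)).
  apply: (bint (M := m) ab mgf) => x /fgm h; by rewrite distrC.
have Im : mu.-integrable `[a,b] (EFin \o (fun=> m)).
  apply: (bint (M := `|m|) ab) => [|x _ //]; exact: measurable_cst.
have mu_ab : fine (mu `[a,b]%classic) = b - a.
  change (fine (lebesgue_measure (`[a,b]%classic : set R)) = b - a).
  rewrite lebesgue_measure_itv /= lte_fin.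
  case: ltP => [_|ba]; first by rewrite -EFinD.
  have -> : b = a by apply/le_anti; rewrite ab ba.
  by rewrite subrr.
have h1 : \int[mu]_(s in `[a,b]) f s - \int[mu]_(s in `[a,b]) g s <= m * (b - a).
  rewrite -mu_ab -Rintegral_cst // -RintegralB //.
  apply: le_Rintegral => // x; rewrite /= in_itv /= => /fgm.
  by move/ler_normlP => [].
have h2 : \int[mu]_(s in `[a,b]) g s - \int[mu]_(s in `[a,b]) f s <= m * (b - a).
  rewrite -mu_ab -Rintegral_cst // -RintegralB //.
  apply: le_Rintegral => // x; rewrite /= in_itv /= => /fgm.
  by rewrite distrC => /ler_normlP[].
by rewrite ler_norml h1 andbT lerNl opprB h2.
Qed.

End I.
Arguments bint {R f a b M}.


Section O.
Context {R : realType}.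
Notation mu := (@lebesgue_measure R).

Definition II (f : R -> R) (x : R) := \int[mu]_(s in `[0, x]) f s.

Lemma oint_II T (f : R -> R) M a b : measurable_fun (`[0,T] : set R) f ->
  (forall x, 0 <= x <= T -> `|f x| <= M) ->
  0 <= a <= T -> 0 <= b <= T -> ointegral a b f = II f b - II f a.
Proof.
move=> mf fM /andP[a0 aT] /andP[b0 bT].
have T0 : 0 <= T by lra.
have IT := bint T0 mf fM.
have sub (i : interval R) : [set` i] `<=` `[0,T] -> mu.-integrable [set` i] (EFin \o f).
  by move=> h; apply: integrableS IT.
have key u v : 0 <= u -> u <= v -> v <= T ->
  \int[mu]_(s in `[u, v]) f s = II f v - II f u.
  move=> u0 uv vT; rewrite /II.
  rewrite (Rintegral_itvB (a := BLeft 0) (b := BRight v) (x := u)); last 3 first.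
  - apply: sub => x /=; rewrite !in_itv /= => /andP[? ?]; apply/andP; split; lra.
  - by rewrite bnd_simp.
  - by rewrite bnd_simp.
  rewrite Rintegral_itv_obnd_cbnd //.
  apply: sub => x /=; rewrite !in_itv /= => /andP[? ?]; apply/andP; split; lra.
rewrite /ointegral; case: ifPn => ab; first exact: key.
rewrite key; [|lra|lra|lra]; by rewrite opprB.
Qed.

End O.

Section G.
Context {R : realType}.
Variables (T K : R) (D : R -> R).
Hypothesis K0 : 0 < K.
Hypothesis D0 : forall r, 0 <= D r.
Hypothesis Dc : {within `[0,T], continuous D}.
Hypothesis DP : forall a b m, 0 <= a <= T -> 0 <= b <= T ->
  (forall r, (a <= r <= b) || (b <= r <= a) -> D r <= m) ->
  D b <= D a + K * m * `|b - a|.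

Let h := (2 * K)^-1.

Lemma gron_loc lo hi a s : 0 <= lo -> lo <= hi -> hi <= T -> hi - lo <= h ->
  lo <= a <= hi -> lo <= s <= hi -> D s <= 2 * D a.
Proof.
move=> lo0 lohi hiT hlh /andP[a1 a2] /andP[s1 s2].
have Dc' : {within `[lo,hi], continuous D}.
  apply: (continuous_subspaceW _ Dc) => x /=; rewrite !in_itv /= => /andP[? ?].
  apply/andP; split; lra.
have [c /[!in_itv]/= /andP[c1 c2] cmax] := EVT_max lohi Dc'.
have Ds : D s <= D c by apply: cmax; rewrite in_itv /= s1 s2.
have aT : 0 <= a <= T by apply/andP; split; lra.
have cT : 0 <= c <= T by apply/andP; split; lra.
have H := DP a c (D c) aT cT.
have H' : D c <= D a + K * D c * `|c - a|.
  apply: H => r /orP[] /andP[r1 r2]; apply: cmax; rewrite in_itv /=; apply/andP; split; lra.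
have ca : `|c - a| <= h.
  rewrite ler_norml; apply/andP; split; lra.
have : K * D c * `|c - a| <= D c / 2.
  apply: (le_trans (ler_wpM2l _ ca)); first by apply: mulr_ge0; [exact: ltW|exact: D0].
  rewrite /h le_eqVlt; apply/orP; left; apply/eqP; field; exact: lt0r_neq0.
lra.
Qed.


Lemma gron_step a s : 0 <= a <= T -> 0 <= s <= T -> `|s - a| <= h ->
  D s <= 2 * D a.
Proof.
move=> /andP[a0 aT] /andP[s0 sT]; rewrite ler_norml => /andP[h1 h2].
case: (leP a s) => as_.
  apply: (@gron_loc a s); rewrite ?lexx ?as_ //; lra.
apply: (@gron_loc s a); rewrite ?lexx ?(ltW as_) //; lra.
Qed.

Lemma h0 : 0 < h.
Proof. by rewrite /h invr_gt0 mulr_gt0. Qed.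

Lemma gron_k k a s : 0 <= a <= T -> 0 <= s <= T -> `|s - a| <= k%:R * h ->
  D s <= 2 ^+ k * D a.
Proof.
elim: k a s => [|k IH] a s aT sT.
  rewrite mul0r normr_le0 subr_eq0 => /eqP ->; by rewrite expr0 mul1r.
have hp := h0.
have Da := D0 a.
have e1 : 1 <= 2 ^+ k :> R by apply: exprn_ege1; lra.
have e2 : 2 * D a <= 2 ^+ k.+1 * D a.
  by rewrite exprS ler_wpM2r // ler_peMr.
rewrite -natr1 mulrDl mul1r ler_norml => /andP[k1 k2].
move: (aT) (sT) => /andP[a0 aT'] /andP[s0 sT'].
case: (leP a s) => as_.
  case: (leP (s - a) h) => sah.
    apply: (le_trans _ e2); apply: gron_step => //; rewrite ler_norml; apply/andP; split; lra.
  have tT : 0 <= s - h <= T by apply/andP; split; lra.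
  have st : D s <= 2 * D (s - h).
    apply: gron_step => //; have -> : s - (s - h) = h by ring.
    by rewrite ger0_norm // ltW.
  apply: (le_trans st).
  rewrite exprS -mulrA ler_wpM2l //.
  apply: IH => //; rewrite ler_norml; apply/andP; split; lra.
case: (leP (a - s) h) => sah.
  apply: (le_trans _ e2); apply: gron_step => //; rewrite ler_norml; apply/andP; split; lra.
have tT : 0 <= s + h <= T by apply/andP; split; lra.
have st : D s <= 2 * D (s + h).
  apply: gron_step => //; have -> : s - (s + h) = - h by ring.
  by rewrite normrN ger0_norm // ltW.
apply: (le_trans st).
rewrite exprS -mulrA ler_wpM2l //.
apply: IH => //; rewrite ler_norml; apply/andP; split; lra.
Qed.

End G.

Lemma gron_final {R : realType} (T K : R) (D : R -> R) : 0 < K ->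
  (forall r, 0 <= D r) -> {within `[0,T], continuous D} ->
  (forall a b m, 0 <= a <= T -> 0 <= b <= T ->
    (forall r, (a <= r <= b) || (b <= r <= a) -> D r <= m) ->
    D b <= D a + K * m * `|b - a|) ->
  forall a s, 0 <= a <= T -> 0 <= s <= T ->
    D s <= 2 ^+ (Num.truncn (T * (2 * K))).+1 * D a.
Proof.
move=> K0 D0 Dc DP.
set k := (Num.truncn (T * (2 * K))).+1.
move=> a s aT sT; apply: (@gron_k R T K D K0 D0 Dc DP) => //.
have hk : T <= k%:R * (2 * K)^-1.
  rewrite ler_pdivlMr ?mulr_gt0 //; apply: ltW; exact: truncnS_gt.
move: aT sT => /andP[? ?] /andP[? ?].
rewrite ler_norml; apply/andP; split; lra.
Qed.

Lemma oint_diff_bound {R : realType} (T : R) (f g : R -> R) M m a b :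
  measurable_fun (`[0,T] : set R) f -> measurable_fun (`[0,T] : set R) g ->
  (forall x, 0 <= x <= T -> `|f x| <= M) ->
  (forall x, 0 <= x <= T -> `|g x| <= M) ->
  0 <= a <= T -> 0 <= b <= T ->
  (forall r, (a <= r <= b) || (b <= r <= a) -> `|f r - g r| <= m) ->
  `|ointegral a b f - ointegral a b g| <= m * `|b - a|.
Proof.
move=> mf mg fM gM /andP[a0 aT] /andP[b0 bT] fgm.
have sub u v : 0 <= u -> v <= T -> (`[u,v] : set R) `<=` `[0,T].
  move=> u0 vT x /=; rewrite !in_itv /= => /andP[? ?]; apply/andP; split; lra.
rewrite /ointegral; case: ifPn => ab.
  rewrite [X in _ <= _ * X]ger0_norm ?subr_ge0 //.
  apply: int_diff_bound => //.
  - exact: (measurable_funS _ (sub a b a0 bT) mf).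
  - exact: (measurable_funS _ (sub a b a0 bT) mg).
  - by move=> x /andP[? ?]; apply: fM; apply/andP; split; lra.
  - by move=> x /andP[? ?]; apply: gM; apply/andP; split; lra.
  - by move=> x xab; apply: fgm; rewrite xab.
have ba : b <= a by move: ab; rewrite -ltNge => /ltW.
rewrite opprK addrC [X in X <= _]distrC [X in _ <= _ * X]distrC.
rewrite [X in _ <= _ * X]ger0_norm ?subr_ge0 //.
apply: int_diff_bound => //.
- exact: (measurable_funS _ (sub b a b0 aT) mf).
- exact: (measurable_funS _ (sub b a b0 aT) mg).
- by move=> x /andP[? ?]; apply: fM; apply/andP; split; lra.
- by move=> x /andP[? ?]; apply: gM; apply/andP; split; lra.
- by move=> x xab; apply: fgm; rewrite xab orbT.
Qed.

Section ODE.
Context {R : realType} {d : nat}.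
Variables (T L M : R) (B : 'rV[R]_d -> R -> 'rV[R]_d).
Hypothesis L0 : 0 < L.
Hypothesis BL : forall x y t, 0 <= t <= T -> `|B x t - B y t| <= L * `|x - y|.
Hypothesis BM : forall x t, 0 <= t <= T -> `|B x t| <= M.
Hypothesis Bm : forall x i, measurable_fun `[0,T] (fun t => B x t ord0 i).

Definition fB (g : R -> 'rV[R]_d) i := fun r => B (g r) r ord0 i.

Definition sol (g : R -> 'rV[R]_d) :=
  {within `[0,T], continuous g} /\
  forall a s i, 0 <= a <= T -> 0 <= s <= T ->
    g s ord0 i - g a ord0 i = ointegral a s (fB g i).

Lemma fB_bound g i r : 0 <= r <= T -> `|fB g i r| <= M.
Proof. by move=> rT; rewrite /fB; exact: le_trans (entry_le_norm _ _) (BM _ _ rT). Qed.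

Lemma fB_meas g i : {within `[0,T], continuous g} ->
  measurable_fun (`[0,T] : set R) (fB g i).
Proof. by move=> cg; exact: (@meas_comp R d T L B BL Bm g i cg). Qed.

Lemma flow_sol Phi t0 x : is_flow T B Phi -> 0 <= t0 <= T ->
  sol (fun t => Phi t t0 x).
Proof.
move=> [Pc Pe] t0T; split; first exact: Pc.
move=> a s i aT sT; rewrite !(Pe t0 _ x i) //.
have mf := fB_meas (fun t => Phi t t0 x) i (Pc t0 x t0T).
have bd := fun r (rT : 0 <= r <= T) => fB_bound (fun t => Phi t t0 x) i r rT.
rewrite /fB in mf bd.
rewrite !(@oint_II R T _ M _ _ mf bd) //.
by rewrite /fB; ring.
Qed.

Lemma sol_diff g1 g2 a s m : sol g1 -> sol g2 ->
  0 <= a <= T -> 0 <= s <= T ->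
  (forall r, (a <= r <= s) || (s <= r <= a) -> `|g1 r - g2 r| <= m) ->
  `|g1 s - g2 s| <= `|g1 a - g2 a| + L * m * `|s - a|.
Proof.
move=> [c1 e1] [c2 e2] aT sT H.
have ha : (a <= a <= s) || (s <= a <= a) by rewrite !lexx /= andbT le_total.
have m0 : 0 <= m := le_trans (normr_ge0 _) (H a ha).
apply: norm_le_entries.
  by apply: addr_ge0 => //; apply: mulr_ge0 => //; apply: mulr_ge0 => //; exact: ltW.
move=> i; rewrite !mxE.
have E : g1 s ord0 i - g2 s ord0 i = (g1 a ord0 i - g2 a ord0 i) +
   (ointegral a s (fB g1 i) - ointegral a s (fB g2 i)).
  by move: (e1 a s i aT sT) (e2 a s i aT sT); lra.
rewrite E; apply: (le_trans (ler_normD _ _)); apply: lerD.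
  by have := entryB_le_norm (g1 a) (g2 a) i.
apply: (@oint_diff_bound R T _ _ M) => //.
- exact: fB_meas.
- exact: fB_meas.
- by move=> r rT; exact: fB_bound.
- by move=> r rT; exact: fB_bound.
move=> r hr.
have rT : 0 <= r <= T.
  move: aT sT hr => /andP[? ?] /andP[? ?] /orP[] /andP[? ?]; apply/andP; split; lra.
rewrite /fB; apply: (le_trans (entryB_le_norm _ _ _)).
apply: (le_trans (BL _ _ _ rT)).
by apply: ler_wpM2l; [exact: ltW|exact: H].
Qed.


Definition C0 : R := 2 ^+ (Num.truncn (T * (2 * L))).+1.

Lemma C0_ge1 : 1 <= C0.
Proof. by apply: exprn_ege1; lra. Qed.

Lemma sol_gron g1 g2 a s : sol g1 -> sol g2 -> 0 <= a <= T -> 0 <= s <= T ->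
  `|g1 s - g2 s| <= C0 * `|g1 a - g2 a|.
Proof.
move=> s1 s2 aT sT.
apply: (@gron_final R T L (fun r => `|g1 r - g2 r|)) => //.
- apply/(subspace_continuousP _ _).2 => x Ax.
  apply: cvg_norm; apply: cvgB.
  + exact: ((subspace_continuousP _ _).1 s1.1 x Ax).
  + exact: ((subspace_continuousP _ _).1 s2.1 x Ax).
- move=> a' b' m aT' bT' H; exact: sol_diff.
Qed.

Variable Phi : R -> R -> 'rV[R]_d -> 'rV[R]_d.
Hypothesis HP : is_flow T B Phi.

Lemma Phi_self t0 x : 0 <= t0 <= T -> Phi t0 t0 x = x.
Proof.
move=> t0T; apply/rowP => i.
have [Pc Pe] := HP.
have mf := fB_meas (fun t => Phi t t0 x) i (Pc t0 x t0T).
have bd := fun r (rT : 0 <= r <= T) => fB_bound (fun t => Phi t t0 x) i r rT.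
rewrite /fB in mf bd.
rewrite (Pe t0 t0 x i) // (@oint_II R T _ M _ _ mf bd) //.
by rewrite subrr addr0.
Qed.

Lemma flow_inv t0 t z : 0 <= t0 <= T -> 0 <= t <= T ->
  Phi t t0 (Phi t0 t z) = z.
Proof.
move=> t0T tT.
have s1 := flow_sol Phi t z HP tT.
have s2 := flow_sol Phi t0 (Phi t0 t z) HP t0T.
have := sol_gron _ _ t0 t s1 s2 t0T tT.
rewrite /= Phi_self // Phi_self // subrr normr0 mulr0 normr_le0 subr_eq0.
by move/eqP => h; rewrite -h.
Qed.

Lemma flow_lip t0 t x w : 0 <= t0 <= T -> 0 <= t <= T ->
  `|x - w| <= C0 * `|Phi t t0 x - Phi t t0 w|.
Proof.
move=> t0T tT.
have := sol_gron _ _ t t0 (flow_sol Phi t0 x HP t0T) (flow_sol Phi t0 w HP t0T) tT t0T.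
by rewrite /= !Phi_self.
Qed.

Lemma flow_move t0 t x : 0 <= t0 <= T -> 0 <= t <= T ->
  `|Phi t t0 x - x| <= M * `|t - t0|.
Proof.
move=> t0T tT.
have M0 : 0 <= M by apply: le_trans (normr_ge0 _) (BM 0 _ t0T).
apply: norm_le_entries; first by apply: mulr_ge0.
move=> i; rewrite !mxE.
have [Pc Pe] := HP.
rewrite (Pe t0 t x i) // addrAC subrr add0r.
have mf := fB_meas (fun t => Phi t t0 x) i (Pc t0 x t0T).
have bd := fun r (rT : 0 <= r <= T) => fB_bound (fun t => Phi t t0 x) i r rT.
rewrite /fB in mf bd.
have H := @oint_diff_bound R T _ (fun=> 0) M M t0 t mf (measurable_cst _) bd.
have Z : ointegral t0 t (fun=> (0:R)) = 0.
  rewrite /ointegral; case: ifP => _.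
    by rewrite Rintegral_cst // mul0r.
  by rewrite Rintegral_cst // mul0r oppr0.
move: H; rewrite Z subr0; apply => //.
- by move=> x0 _; rewrite normr0.
- move=> r hr; rewrite subr0; apply: bd.
  move: t0T tT hr => /andP[? ?] /andP[? ?] /orP[] /andP[? ?]; apply/andP; split; lra.
Qed.

End ODE.

Lemma sum_bound {R : realType} {d : nat} (x0 w x : 'rV[R]_d) (eta r : R) :
  0 <= r -> 0 < eta -> d%:R * eta ^+ 2 <= r ^+ 2 / 4 ->
  `|w - x| < eta ->
  \sum_(i < d) (x ord0 i - x0 ord0 i) ^+ 2 <= (r / 2) ^+ 2 ->
  \sum_(i < d) (w ord0 i - x0 ord0 i) ^+ 2 <= r ^+ 2.
Proof.
move=> r0 e0 hd wx hx.
have pt i : (w ord0 i - x0 ord0 i) ^+ 2 <=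
    2 * eta ^+ 2 + 2 * (x ord0 i - x0 ord0 i) ^+ 2.
  have := entryB_le_norm w x i => hi.
  have : `|w ord0 i - x ord0 i| < eta by exact: le_lt_trans hi wx.
  rewrite ltr_norml => /andP[h1 h2].
  set a := w ord0 i - x ord0 i in h1 h2.
  set b := x ord0 i - x0 ord0 i.
  have -> : w ord0 i - x0 ord0 i = a + b by rewrite /a /b; ring.
  have ha : a ^+ 2 <= eta ^+ 2.
    rewrite -subr_ge0; have -> : eta ^+ 2 - a ^+ 2 = (eta - a) * (eta + a) by ring.
    apply: mulr_ge0; lra.
  have hab : 0 <= (a - b) ^+ 2 by exact: sqr_ge0.
  have -> : (a + b) ^+ 2 = 2 * a ^+ 2 + 2 * b ^+ 2 - (a - b) ^+ 2 by ring.
  lra.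
apply: (le_trans (ler_sum _ (fun i _ => pt i))).
rewrite big_split /= sumr_const card_ord -mulr_sumr.
have -> : 2 * eta ^+ 2 *+ d = 2 * (d%:R * eta ^+ 2) by rewrite -mulr_natl; ring.
move: hx; set S := \sum_(i < d) _ => hx.
have : (r / 2) ^+ 2 = r ^+ 2 / 4 by field.
lra.
Qed.

Lemma ballE {R : realType} {d : nat} (x y : 'rV[R]_d) e : ball x e y = (`|x - y| < e).
Proof. by rewrite -ball_normE. Qed.

Lemma closure_near {R : realType} {d : nat} (A : set 'rV[R]_d) p e :
  closure A p -> 0 < e -> exists q, A q /\ `|p - q| < e.
Proof.
move=> cp e0; have [q [Aq bq]] := cp _ (nbhsx_ballx p e e0).
by exists q; split => //; rewrite -ballE.
Qed.

Lemma cball_norm {R : realType} {d : nat} (x0 x : 'rV[R]_d) r : 0 <= r ->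
  euclid_cball x0 r x -> `|x - x0| <= r.
Proof.
rewrite /euclid_cball /= => r0 hx; apply: norm_le_entries => // i.
rewrite !mxE.
have hi : (x ord0 i - x0 ord0 i) ^+ 2 <= r ^+ 2.
  apply: le_trans hx; rewrite (bigD1 i) //= lerDl.
  by apply: sumr_ge0 => j _; exact: sqr_ge0.
set b := x ord0 i - x0 ord0 i in hi *.
rewrite ler_norml; apply/andP; split; nra.
Qed.

Theorem proposition2p2 (R : realType) (d : nat) (Omega : set 'rV[R]_d)
  (T T0 r0 : R) (B : 'rV[R]_d -> R -> 'rV[R]_d)
  (Phi : R -> R -> 'rV[R]_d -> 'rV[R]_d) (O : set 'rV[R]_d) :
  open Omega -> bounded_set Omega ->
  0 < T -> 0 < T0 < T -> 0 < r0 ->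
  Linf_W1inf T B -> is_flow T B Phi ->
  open O -> O !=set0 -> bounded_set (closure O `\` O) ->
  flushing T T0 r0 Phi Omega O ->
  exists O0 : set 'rV[R]_d,
    [/\ open O0, compact (closure O0), closure O0 `<=` O &
        flushing T T0 (r0 / 2) Phi Omega O0].
Proof.
move=> _ bOm Tp /andP[T00 T0T] r00 [Bm [M BM] [L' BL']] HP _ _ _ Hfl.
set L := `|L'| + 1.
have L0 : 0 < L by rewrite /L ltr_wpDl.
have BL : forall x y t, 0 <= t <= T -> `|B x t - B y t| <= L * `|x - y|.
  move=> x y t tT; apply: le_trans (BL' x y t tT) _.
  by apply: ler_wpM2r => //; rewrite /L; apply: le_trans (ler_norm L') _; lra.
have M0 : 0 <= M by apply: le_trans (normr_ge0 _) (BM 0 0 _); rewrite lexx ltW.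
have finv := @flow_inv R d T L M B L0 BL BM Bm Phi HP.
have flip := @flow_lip R d T L M B L0 BL BM Bm Phi HP.
have fmov := @flow_move R d T L M B BL BM Bm Phi HP.
set C := C0 T L.
have C1 : 1 <= C by exact: C0_ge1.
have C0p : 0 < C by lra.
set eta := r0 / (2 * (d%:R + 1)).
have dp : 0 < d%:R + 1 :> R by rewrite ltr_wpDl.
have eta0 : 0 < eta by rewrite /eta divr_gt0 // mulr_gt0.
have etaE : eta * (2 * (d%:R + 1)) = r0 by rewrite /eta; field; lra.
have hd : d%:R * eta ^+ 2 <= r0 ^+ 2 / 4.
  have h1 : d%:R * eta <= r0 / 2.
    have : 0 <= eta := ltW eta0. lra.
  have h2 : eta <= r0 / 2.
    have : 0 <= d%:R * eta :> R by apply: mulr_ge0 => //; exact: ltW.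
    lra.
  have -> : r0 ^+ 2 / 4 = (r0 / 2) * (r0 / 2) by field.
  rewrite expr2 mulrA; apply: ler_pM => //.
  by apply: mulr_ge0 => //; exact: ltW.
  exact: ltW.
set eps := eta / C.
have eps0 : 0 < eps by rewrite /eps divr_gt0.
have eps2 : 0 < eps / 2 by rewrite divr_gt0.
pose S := [set y | exists x0 t0 t x, [/\ closure Omega x0, (T0 <= t0 <= T) && (t0 - T0 < t < t0), (forall x', euclid_cball x0 r0 x' -> O (Phi t t0 x')),
   euclid_cball x0 (r0 / 2) x & y = Phi t t0 x]].
have key : forall y z, S y -> `|y - z| < eps -> O z.
  move=> y z [x0 [t0 [t [x [cx0 /andP[/andP[t01 t02] /andP[tt1 tt2]] Hb cx ->]]]]] yz.
  have t0T : 0 <= t0 <= T by apply/andP; split; lra.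
  have tT : 0 <= t <= T by apply/andP; split; lra.
  rewrite -(finv t0 t z t0T tT); apply: Hb.
  set w := Phi t0 t z.
  have xw : `|w - x| < eta.
    rewrite distrC; apply: le_lt_trans (flip t0 t x w t0T tT) _.
    rewrite /w (finv t0 t z t0T tT).
    have : C * `|Phi t t0 x - z| < C * eps by rewrite ltr_pM2l.
    by rewrite /eps mulrCA mulfV ?gt_eqF // mulr1.
  rewrite /euclid_cball /=; exact: (sum_bound _ _ _ _ _ (ltW r00) eta0 hd xw cx).
pose O0 := \bigcup_(y in S) ball y (eps / 2).
have clO0 : forall p, closure O0 p -> exists2 y, S y & `|y - p| < eps.
  move=> p cp; have [q [[y Sy yq] pq]] := closure_near _ _ _ cp eps2.
  exists y => //; rewrite ballE in yq.
  apply: le_lt_trans (ler_distD q y p) _.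
  rewrite (distrC q p); lra.
have [MO [_ HMO]] := bOm.
have HO : forall x, Omega x -> `|x| <= MO + 1.
  by move=> x Ox; apply: (HMO (MO + 1)) => //; lra.
exists O0; split.
- by apply: bigcup_open => y _; exact: ball_open.
- apply: bounded_closed_compact; last exact: closed_closure.
  exists (MO + 2 + r0 / 2 + M * T + eps); split; first exact: num_real.
  move=> K HK p /clO0 [y [x0 [t0 [t [x [cx0 /andP[/andP[t01 t02] /andP[tt1 tt2]] Hb cx ->]]]]] yp].
  have t0T : 0 <= t0 <= T by apply/andP; split; lra.
  have tT : 0 <= t <= T by apply/andP; split; lra.
  have [q [Oq x0q]] := closure_near _ _ 1 cx0 ltr01.
  have hq := HO q Oq.
  have hx0 : `|x0| <= MO + 2.
    have := ler_normD (x0 - q) q; rewrite subrK; lra.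
  have hxx0 : `|x - x0| <= r0 / 2 by apply: cball_norm => //; lra.
  have hmov : `|Phi t t0 x - x| <= M * T.
    apply: le_trans (fmov t0 t x t0T tT) _; apply: ler_wpM2l => //.
    rewrite ler_norml; apply/andP; split; lra.
  have hy : `|Phi t t0 x| <= M * T + r0 / 2 + (MO + 2).
    have := ler_normD (Phi t t0 x - x) x; rewrite subrK => h1.
    have := ler_normD (x - x0) x0; rewrite subrK => h2.
    lra.
  have := ler_normD (p - Phi t t0 x) (Phi t t0 x); rewrite subrK distrC => h3.
  apply: ltW; apply: le_lt_trans HK; lra.
- move=> p /clO0 [y Sy yp]; exact: key Sy yp.
- move=> x0 t0 cx0 t0T; have [t [tt Ht]] := Hfl x0 t0 cx0 t0T.
  exists t; split => // x cx.
  exists (Phi t t0 x); last exact: ballxx.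
  by exists x0, t0, t, x; split => //; rewrite t0T tt.
Qed.
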